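(* Let $n,m$ be positive integers and $\mathbf a,\mathbf b\in\{0,1\}^n$. If the $(\mathbf a,\mathbf b)$-entry of $(A_n)^m$ is positive, then so is the $(\mathbf a,\mathbf b)$-entry of $(A_n)^{m+1}$. Furthermore, the $(\mathbf a,\mathbf b)$-entry of $(A_n)^m$ is positive if and only if $\mathbf a\trianglerighteq_z\mathbf b$ for some $z\le m$.
   Context: Dominance: $\mathbf v\trianglerighteq\mathbf w$ iff $\sum_{k\le i}v_k\ge\sum_{k\le i}w_k$ for all $i$. For $\mathbf v\in\mathbb N^n$, $\chi(\mathbf v)_i=1$ if $v_i>0$ and $0$ otherwise. For $\mathbf v,\mathbf w\in\mathbb N^n$ with $\mathbf v\trianglerighteq\mathbf w$ and $\chi(\mathbf v)\trianglerighteq\chi(\mathbf w)$, let $Z_{\mathbf v}=\{i:v_i=0\}$, $Z_{\mathbf w}=\{i:w_i=0\}$, and construct the matching $M\subseteq Z_{\mathbf v}\times Z_{\mathbf w}$ by repeatedly taking the largest unmatched index $i'\in Z_{\mathbf v}$ and matching it to the largest unmatched index in $Z_{\mathbf w}$ that is $\le i'$, until all of $Z_{\mathbf v}$ is matched. With $z=\max\{\max\{i-j:(i,j)\in M\},1\}$ one says $\mathbf v$ $z$-dominates $\mathbf w$, written $\mathbf v\trianglerighteq_z\mathbf w$ (this notation always presupposes $\mathbf v\trianglerighteq\mathbf w$ and $\chi(\mathbf v)\trianglerighteq\chi(\mathbf w)$). $A_n$ is the $2^n\times2^n$ matrix with rows and columns indexed by $\{0,1\}^n$, with $(A_n)_{\mathbf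 u,\mathbf v}=1$ if $\mathbf u\trianglerighteq_1\mathbf v$ and $0$ otherwise. *)

(* Defs.v *)
From HB Require Import structures.
From mathcomp Require Import all_boot all_order all_algebra.
Set Implicit Arguments. Unset Strict Implicit. Unset Printing Implicit Defensive.
Import GRing.Theory.

(* Vectors in N^n are finite functions 'I_n -> nat; index i : 'I_n is the
   paper's index i+1 (0-based indexing; only differences of indices matter). *)
Notation nvec n := {ffun 'I_n -> nat}.

Definition dom n (v w : nvec n) : bool :=
  [forall i : 'I_n, \sum_(k < n | k <= i) w k <= \sum_(k < n | k <= i) v k].

Definition chi n (v : nvec n) : nvec n := [ffun i => nat_of_bool (0 < v i)].

Definition zeros_desc n (v : nvec n) : seq nat :=
  rev [seq val i | i <- enum 'I_n & v i == 0].
Definition zeros n (v : nvec n) : seq nat :=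
  [seq val i | i <- enum 'I_n & v i == 0].

(* Greedy matching: take the largest unmatched i' of Z_v (zv is decreasing),
   match it with the largest unmatched j in Z_w (avail) with j <= i'.
   Returns None if at some step no such j exists. *)
Fixpoint greedy_match (zv avail : seq nat) : option (seq (nat * nat)) :=
  match zv with
  | [::] => Some [::]
  | i :: zv' =>
      let c := [seq j <- avail | j <= i] in
      if c is [::] then None
      else let j := foldr maxn 0 c in
           if greedy_match zv' (rem j avail) is Some M then Some ((i, j) :: M)
           else None
  end.

Definition matching n (v w : nvec n) : option (seq (nat * nat)) :=
  greedy_match (zeros_desc v) (zeros w).

(* z = max{ max{i - j : (i,j) in M}, 1 }  (all pairs satisfy j <= i). *)
Definition zval (M : seq (nat * nat)) : nat :=
  maxn (foldr maxn 0 [seq p.1 - p.2 | p <- M]) 1.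

Definition zdom n (z : nat) (v w : nvec n) : bool :=
  [&& dom v w, dom (chi v) (chi w) &
      if matching v w is Some M then zval M == z else false].

Notation bvec n := {ffun 'I_n -> bool}.
Definition natv n (u : bvec n) : nvec n := [ffun i => nat_of_bool (u i)].

Definition A_mat n : 'M[nat]_(#|{: bvec n}|) :=
  \matrix_(i, j) nat_of_bool (zdom 1 (natv (enum_val i)) (natv (enum_val j))).

Definition Apow_entry n (m : nat) (a b : bvec n) : nat :=
  (((A_mat n) ^+ m)%R) (enum_rank a) (enum_rank b).

(* Main.v *)
Require Import Defs.
From mathcomp Require Import all_boot all_order all_algebra.
From mathcomp Require Import zify.
Set Implicit Arguments. Unset Strict Implicit. Unset Printing Implicit Defensive.

Definition gtr : rel nat := fun x y => y < x.
Lemma gtr_trans : transitive gtr.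
Proof. move=> x y z; rewrite /gtr; lia. Qed.

Lemma foldr_max_ge s x : x \in s -> x <= foldr maxn 0 s.
Proof.
elim: s => [//|y s IH] /=; rewrite inE => /orP [/eqP ->|/IH]; lia.
Qed.

Lemma foldr_max_mem x s : foldr maxn 0 (x :: s) \in x :: s.
Proof.
elim: s x => [|y s IH] x /=; first by rewrite maxn0 inE.
have := IH y; rewrite /=.
case: (leqP x (maxn y (foldr maxn 0 s))) => h.
  by rewrite !inE => ->; rewrite orbT.
by move=> _; rewrite inE eqxx.
Qed.

Lemma greedy_sound zv avail M : greedy_match zv avail = Some M -> uniq avail ->
  sorted gtr zv ->
  [/\ map fst M = zv, {subset map snd M <= avail}, uniq (map snd M),
      all (fun p => p.2 <= p.1) M &
      forall p q, p \in M -> q \in M -> p.1 < q.1 -> p.2 < q.2].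
Proof.
elim: zv avail M => [|i zv IH] avail M /=.
  by case=> <-.
case E: [seq j <- avail | j <= i] => [//|x s].
set j := foldr maxn 0 (x :: s).
case E2: (greedy_match zv (rem j avail)) => [M'|//]; case=> <- ua si.
have jc : j \in [seq j <- avail | j <= i] by rewrite E foldr_max_mem.
rewrite mem_filter in jc; case/andP: jc => ji ja.
have ua' : uniq (rem j avail) by exact: rem_uniq.
have [h1 h2 h3 h4 h5] := IH _ _ E2 ua' (path_sorted si).
have lti : all (gtr i) zv := order_path_min gtr_trans si.
have key : forall q, q \in M' -> q.2 < j.
  move=> q qM.
  have q2 : q.2 \in rem j avail by apply: h2; apply: map_f.
  rewrite (mem_rem_uniq _ ua) inE in q2; case/andP: q2 => q2j q2a.
  have q1 : q.1 \in zv by rewrite -h1; apply: map_f.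
  have qi : q.1 < i by have := allP lti _ q1.
  have q21 : q.2 <= q.1 by have := allP h4 _ qM.
  have : q.2 \in [seq j <- avail | j <= i] by rewrite mem_filter q2a; lia.
  rewrite E => /foldr_max_ge; rewrite -/j => h.
  by rewrite ltn_neqAle q2j h.
split => /=.
- by rewrite h1.
- move=> y; rewrite inE => /orP [/eqP ->//|/h2]; rewrite (mem_rem_uniq _ ua) inE.
  by case/andP.
- rewrite h3 andbT; apply/negP => /mapP [q qM qe].
  by have := key q qM; rewrite -qe ltnn.
- by rewrite ji h4.
- move=> p q; rewrite !inE => /orP [/eqP ->|pM] /orP [/eqP ->|qM] /=.
  + by rewrite ltnn.
  + have q1 : q.1 \in zv by rewrite -h1; apply: map_f.
    have := allP lti _ q1; rewrite /gtr; lia.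
  + by move=> _; apply: key.
  + exact: h5.
Qed.

Lemma greedy_complete z zv avail (phi : nat -> nat) :
  sorted gtr zv -> uniq avail ->
  (forall i, i \in zv -> [&& phi i \in avail, phi i <= i & i - phi i <= z]) ->
  {in zv &, injective phi} ->
  exists M, greedy_match zv avail = Some M /\ all (fun p => p.1 - p.2 <= z) M.
Proof.
elim: zv avail phi => [|i zv IH] avail phi /=.
  by move=> _ _ _ _; exists [::].
move=> si ua hphi inj.
have lti : all (gtr i) zv := order_path_min gtr_trans si.
have /and3P [pa pi pz] := hphi i (mem_head _ _).
have pc : phi i \in [seq j <- avail | j <= i] by rewrite mem_filter pa pi.
case E: [seq j <- avail | j <= i] => [|x s]; first by rewrite E in pc.
set j := foldr maxn 0 (x :: s).
have jc : j \in [seq j <- avail | j <= i] by rewrite E foldr_max_mem.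
rewrite mem_filter in jc; case/andP: jc => ji ja.
have pj : phi i <= j by rewrite E in pc; apply: foldr_max_ge.
pose phi' x := if phi x == j then phi i else phi x.
have ua' : uniq (rem j avail) by exact: rem_uniq.
have xi : forall x, x \in zv -> x < i by move=> y yz; have := allP lti _ yz.
have xz : forall x, x \in zv -> x \in i :: zv by move=> y yz; rewrite inE yz orbT.
have [M' [-> hM']] : exists M', greedy_match zv (rem j avail) = Some M' /\
    all (fun p => p.1 - p.2 <= z) M'.
  apply: (IH _ phi') => //.
  - exact: path_sorted si.
  - move=> y yz; rewrite /phi'.
    have /and3P [ya yy yzz] := hphi y (xz _ yz).
    have yi := xi _ yz.
    case: eqP => [ej|nej].
    + have pij : phi i != j.
        apply/eqP => e; have : phi i = phi y by rewrite e ej.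
        move/(inj _ _ (mem_head _ _) (xz _ yz)) => eiy; lia.
      rewrite (mem_rem_uniq _ ua) inE pij pa /=; lia.
    + rewrite (mem_rem_uniq _ ua) inE ya andbT yy yzz /= andbT.
      by apply/eqP.
  - move=> y1 y2 y1z y2z; rewrite /phi'.
    have e1 := xi _ y1z; have e2 := xi _ y2z.
    case: eqP => [ej1|nej1]; case: eqP => [ej2|nej2].
    + by move=> _; apply: inj; rewrite ?xz // ej1 ej2.
    + move/(inj _ _ (mem_head _ _) (xz _ y2z)) => ei; lia.
    + move/esym/(inj _ _ (mem_head _ _) (xz _ y1z)) => ei; lia.
    + by apply: inj; rewrite xz.
exists ((i, j) :: M'); split => //=; rewrite hM' andbT; lia.
Qed.
Section V.
Variable n : nat.
Implicit Types a b c : bvec n.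

Lemma natv0 a (i : 'I_n) : (natv a i == 0) = ~~ a i.
Proof. by rewrite ffunE; case: (a i). Qed.

Lemma zerosP a k : reflect (exists2 i : 'I_n, val i = k & ~~ a i) (k \in zeros (natv a)).
Proof.
apply: (iffP mapP) => [[i] | [i ik ai]].
  by rewrite mem_filter natv0 => /andP [ai _] ->; exists i.
by exists i => //; rewrite mem_filter natv0 ai mem_enum.
Qed.

Lemma zeros_ord a (i : 'I_n) : (val i \in zeros (natv a)) = ~~ a i.
Proof.
apply/idP/idP => [/zerosP [j /val_inj -> //]|ai]; apply/zerosP; by exists i.
Qed.

Lemma zeros_lt a k : k \in zeros (natv a) -> k < n.
Proof. by case/zerosP => i <- _; apply: ltn_ord. Qed.

Lemma zeros_uniq a : uniq (zeros (natv a)).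
Proof. by rewrite (map_inj_uniq val_inj) filter_uniq // enum_uniq. Qed.

Lemma zeros_sorted a : sorted ltn (zeros (natv a)).
Proof.
rewrite /zeros sorted_map sorted_filter //.
  by move=> x y z; apply: ltn_trans.
by rewrite -sorted_map val_enum_ord iota_ltn_sorted.
Qed.

Lemma zd_sorted a : sorted gtr (zeros_desc (natv a)).
Proof. by rewrite /zeros_desc rev_sorted; apply: zeros_sorted. Qed.

Lemma zd_mem a : zeros_desc (natv a) =i zeros (natv a).
Proof. by move=> k; rewrite /zeros_desc mem_rev. Qed.

Definition S z a b := exists M, matching (natv a) (natv b) = Some M /\
   all (fun p => p.1 - p.2 <= z) M.

Definition F z a b (phi : nat -> nat) :=
  (forall i, i \in zeros (natv a) ->
     [&& phi i \in zeros (natv b), phi i <= i & i - phi i <= z]) /\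
  {in zeros (natv a) &, injective phi}.

Lemma S_of_F z a b phi : F z a b phi -> S z a b.
Proof.
case=> h1 h2; apply: (greedy_complete (phi := phi)).
- exact: zd_sorted.
- exact: zeros_uniq.
- by move=> i; rewrite zd_mem; apply: h1.
- by move=> x y; rewrite !zd_mem; apply: h2.
Qed.

Definition lookup (M : seq (nat * nat)) k := nth 0 (map snd M) (index k (map fst M)).

Lemma lookup_mem M p : uniq (map fst M) -> p \in M -> lookup M p.1 = p.2.
Proof.
rewrite /lookup; elim: M => [//|q M IH] /= /andP [qn u]; rewrite inE.
case/orP => [/eqP ->|pM]; first by rewrite eqxx.
have pq : q.1 != p.1.
  by apply/eqP => e; move: qn; rewrite e map_f.
by rewrite (negbTE pq) /=; apply: IH.
Qed.

Lemma F_of_S z a b : S z a b -> exists phi, F z a b phi /\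
  {in zeros (natv a) &, forall x y, x < y -> phi x < phi y}.
Proof.
case=> M [hM hz].
have [h1 h2 h3 h4 h5] := greedy_sound hM (zeros_uniq b) (zd_sorted a).
have u1 : uniq (map fst M) by rewrite h1 /zeros_desc rev_uniq zeros_uniq.
have getp : forall i, i \in zeros (natv a) -> exists2 p, p \in M & p.1 = i.
  by move=> i; rewrite -zd_mem -h1 => /mapP [p pM ->]; exists p.
exists (lookup M).
have mono : {in zeros (natv a) &, forall x y, x < y -> lookup M x < lookup M y}.
  move=> x y /getp [p pM <-] /getp [q qM <-]; rewrite !lookup_mem //.
  exact: h5.
split => //; split.
  move=> i /getp [p pM <-]; rewrite lookup_mem //.
  have -> : p.2 \in zeros (natv b) by apply: h2; apply: map_f.
  by have := allP h4 _ pM; have := allP hz _ pM => -> ->.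
move=> x y xz yz e.
case: (ltngtP x y) => // lt.
  by have := mono _ _ xz yz lt; rewrite e ltnn.
by have := mono _ _ yz xz lt; rewrite e ltnn.
Qed.

Lemma F_comp z1 z2 a c b phi chi : F z1 a c phi -> F z2 c b chi ->
  F (z1 + z2) a b (chi \o phi).
Proof.
case=> h1 i1 [h2 i2]; split.
  move=> i iz; have /and3P [pc pi pz] := h1 i iz.
  have /and3P [qc qi qz] := h2 _ pc.
  rewrite /= qc /=; lia.
move=> x y xz yz /= e.
have /and3P [pc _ _] := h1 x xz; have /and3P [qc _ _] := h1 y yz.
by apply: i1 => //; apply: i2.
Qed.

Lemma sum_natv a (i : 'I_n) :
  \sum_(k < n | k <= i) natv a k + count (fun x => x <= i) (zeros (natv a)) =
  \sum_(k < n | k <= i) 1.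
Proof.
rewrite /zeros count_map count_filter -sum1_count big_enum_cond /=.
rewrite [X in X + _]big_mkcond [X in _ + X]big_mkcond [RHS]big_mkcond -big_split /=.
apply: eq_bigr => k _; rewrite ffunE; case: (a k); case: (k <= i) => //.
Qed.

Lemma F_dom z a b phi : F z a b phi -> dom (natv a) (natv b).
Proof.
case=> h1 h2; apply/forallP => i.
have ea := sum_natv a i; have eb := sum_natv b i.
suff : count (fun x => x <= i) (zeros (natv a)) <=
       count (fun x => x <= i) (zeros (natv b)) by lia.
rewrite -!size_filter -(size_map phi).
apply: uniq_leq_size.
  rewrite map_inj_in_uniq ?filter_uniq ?zeros_uniq //.
  by move=> x y; rewrite !mem_filter => /andP [_ xz] /andP [_ yz]; apply: h2.
move=> y /mapP [x]; rewrite mem_filter => /andP [xi xz] ->.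
have /and3P [p1 p2 _] := h1 x xz.
by rewrite mem_filter p1 andbT (leq_trans p2 xi).
Qed.

Lemma F_split z a b phi : F z.+1 a b phi ->
  {in zeros (natv a) &, forall x y, x < y -> phi x < phi y} ->
  exists c, S 1 a c /\ S z c b.
Proof.
case=> h1 h2 mono.
pose Za := zeros (natv a).
pose psi i := maxn (phi i) i.-1.
have psi_inj : {in Za &, injective psi}.
  move=> x y xz yz e.
  have /and3P [_ px _] := h1 x xz; have /and3P [_ py _] := h1 y yz.
  case: (ltngtP x y) => // lt.
    by have := mono _ _ xz yz lt; move: e; rewrite /psi; lia.
  by have := mono _ _ yz xz lt; move: e; rewrite /psi; lia.
pose c : bvec n := [ffun k : 'I_n => val k \notin map psi Za].
have memc : forall k, (k \in zeros (natv c)) = (k \in map psi Za).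
  move=> k; apply/idP/idP.
    by case/zerosP => j <-; rewrite ffunE negbK.
  move=> kin.
  have kn : k < n.
    case/mapP: kin => i iz ->; have := zeros_lt iz.
    have /and3P [_ pi _] := h1 i iz; rewrite /psi; lia.
  have -> : k = val (Ordinal kn) by [].
  by rewrite zeros_ord ffunE negbK.
exists c; split.
  apply: (S_of_F (phi := psi)); split => //.
  move=> i iz; rewrite memc map_f //=; have /and3P [_ pi _] := h1 i iz.
  by apply/andP; split; rewrite /psi; lia.
apply: (S_of_F (phi := fun k => phi (nth 0 Za (index k (map psi Za))))); split.
  move=> k; rewrite memc => /mapP [i iz ->]; rewrite (nth_index_map _ psi_inj iz).
  have /and3P [pb pi pz] := h1 i iz; rewrite pb /=.
  by apply/andP; split; rewrite /psi; lia.
move=> x y; rewrite !memc => /mapP [i iz ->] /mapP [j jz ->].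
rewrite (nth_index_map _ psi_inj iz) (nth_index_map _ psi_inj jz) => e.
by rewrite (h2 _ _ iz jz e).
Qed.

Lemma foldr_max_le s z : (foldr maxn 0 s <= z) = all (fun x => x <= z) s.
Proof. by elim: s => //= x s <-; rewrite geq_max. Qed.

Lemma zdom_S z a b : zdom z (natv a) (natv b) -> S z a b.
Proof.
case/and3P => _ _; case E: matching => [M|//] /eqP hz; exists M; split => //.
have : foldr maxn 0 [seq p.1 - p.2 | p <- M] <= z by rewrite -hz /zval leq_maxl.
rewrite foldr_max_le => /allP h; apply/allP => p pM; exact: (h _ (map_f _ pM)).
Qed.

Lemma zdom_pos z a b : zdom z (natv a) (natv b) -> 0 < z.
Proof. by case/and3P => _ _; case: matching => [M|//] /eqP <-; rewrite /zval leq_maxr. Qed.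

Lemma chi_natv a : chi (natv a) = natv a.
Proof. by apply/ffunP => i; rewrite !ffunE; case: (a i). Qed.

Lemma S_zdom z a b : 0 < z -> S z a b -> exists2 z', z' <= z & zdom z' (natv a) (natv b).
Proof.
move=> z0 hS; have [phi [hF _]] := F_of_S hS; have hd := F_dom hF.
case: hS => M [hM hz]; exists (zval M).
  rewrite /zval geq_max z0 andbT foldr_max_le.
  by apply/allP => x /mapP [p pM ->]; apply: (allP hz).
by rewrite /zdom !chi_natv hd hM eqxx.
Qed.

Lemma S_weaken z z' a b : z <= z' -> S z a b -> S z' a b.
Proof.
move=> zz [M [hM hz]]; exists M; split => //.
by apply: sub_all hz => p /= h; apply: leq_trans h zz.
Qed.

End V.
Import GRing.Theory.

Lemma A_entry n (a c : bvec n) :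
  A_mat n (enum_rank a) (enum_rank c) = zdom 1 (natv a) (natv c).
Proof. by rewrite mxE !enum_rankK. Qed.

Lemma pow_pos n m (a b : bvec n) : 0 < Apow_entry m.+1 a b <-> S m.+1 a b.
Proof.
elim: m a b => [|m IH] a b.
  rewrite /Apow_entry expr1 A_entry lt0b; split; first exact: zdom_S.
  case/(S_zdom (ltn0Sn 0)) => z' z1 hz.
  have z0 := zdom_pos hz; have e1 : z' = 1 by lia. subst z'. exact hz.
rewrite /Apow_entry exprS -mulmxE mxE.
split.
  case: (boolP [exists k, 0 < A_mat n (enum_rank a) k * (A_mat n ^+ m.+1)%R k (enum_rank b)]).
    case/existsP => k; rewrite -(enum_valK k) A_entry.
    set c := enum_val k; rewrite muln_gt0 lt0b => /andP [h1 h2].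
    have [phi [hF _]] := F_of_S (zdom_S h1).
    have [chi [hG _]] := F_of_S ((IH c b).1 h2).
    have := S_of_F (F_comp hF hG); by rewrite add1n.
  move/existsPn => hn; rewrite big1 // => k _.
  by apply/eqP; rewrite -leqn0 leqNgt hn.
move=> hS; have [phi [hF mono]] := F_of_S hS.
have [c [h1 h2]] := F_split hF mono.
rewrite (bigD1 (enum_rank c)) //=.
apply: (@leq_trans (A_mat n (enum_rank a) (enum_rank c) * (A_mat n ^+ m.+1)%R (enum_rank c) (enum_rank b))); last exact: leq_addr.
rewrite A_entry muln_gt0 ((IH c b).2 h2) andbT.
case/(S_zdom (ltn0Sn 0)): h1 => z' z1 hz.
have z0 := zdom_pos hz; have e1 : z' = 1 by lia. subst z'. by rewrite lt0b.
Qed.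

Theorem lemma5p24 (n m : nat) (a b : {ffun 'I_n -> bool}) :
  0 < n -> 0 < m ->
  (0 < Apow_entry m a b -> 0 < Apow_entry m.+1 a b) /\
  (0 < Apow_entry m a b <-> exists z, z <= m /\ zdom z (natv a) (natv b)).
Proof.
move=> n0; case: m => // m _.
have key := pow_pos m a b.
split.
  by move/key => hS; apply/(pow_pos m.+1); apply: S_weaken hS.
split.
  by move/key => /(S_zdom (ltn0Sn _)) [z' h1 h2]; exists z'.
case=> z [zm hz]; apply/key; exact: S_weaken zm (zdom_S hz).
Qed.
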